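(* Let $\ell\ge1$, $S=\{1,\dots,\ell\}$, and let $\mathbb C(\mathbf X)$ be the field of rational functions in the $X$-variables $X^i_n$ ($i\in S$, $n\in\mathbb Z$) of the infinite quiver $Q(A_\ell)$, with Poisson bracket $\{X_u,X_v\}=\varepsilon_{uv}X_uX_v$. Let $\mathbb C(a)$ be the field of rational functions in the variables $a_i(n)$ ($i\in S$, $n\in\mathbb Z$) with log-canonical Poisson bracket determined by $\{a_i(n),a_i(n')\}=(\delta_{n',n+1}-\delta_{n',n-1})a_i(n)a_i(n')$ for $i\in S$, $\{a_i(n),a_{i+1}(n')\}=(\delta_{n',n-1}-\delta_{n',n})a_i(n)a_{i+1}(n')$ for $1\le i\le\ell-1$, and all other pairs of generators Poisson commuting. Then the field isomorphism $\beta:\mathbb C(\mathbf X)\to\mathbb C(a)$, $X^i_n\mapsto a_i(n)^{-1}$, is a Poisson map.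
   Context: The quiver $Q(A_\ell)$ has vertices $v^i_n$ ($i\in S$, $n\in\mathbb Z$) and arrows $v^i_n\to v^i_{n+1}$ for all $i$, and $v^{i+1}_n\to v^i_n$, $v^i_{n+1}\to v^{i+1}_n$ for $1\le i\le\ell-1$; its exchange matrix is $\varepsilon_{uv}=\#\{\text{arrows }u\to v\}-\#\{\text{arrows }v\to u\}$, and $X^i_n$ is the $X$-variable at $v^i_n$. (In the paper $a_i(n)=y_i(n)y_i(n+1)/(y_{i-1}(n+1)y_{i+1}(n))$ with $y_0=y_{\ell+1}=1$, the image of the Frenkel–Reshetikhin variable $A_{i,aq^{2n+i}}$; the bracket above is the one induced from the Frenkel–Reshetikhin Poisson structure.) *)

(* Defs.v *)
From HB Require Import structures.
From mathcomp Require Import all_boot all_order all_algebra.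
Set Implicit Arguments. Unset Strict Implicit. Unset Printing Implicit Defensive.
Import Order.TTheory GRing.Theory Num.Theory.
Local Open Scope ring_scope.

(* Vertices v^i_n of Q(A_l): i : 'I_l encodes the paper's index i+1 in S={1..l}. *)
Definition vertex (l : nat) := ('I_l * int)%type.

(* Number of arrows u -> v in Q(A_l):
   v^i_n -> v^i_{n+1};  v^{i+1}_n -> v^i_n;  v^i_{n+1} -> v^{i+1}_n. *)
Definition narrows (l : nat) (u v : vertex l) : nat :=
  let: (i, n) := u in let: (j, m) := v in
  (((i == j) && (m == n + 1)) : nat)
  + (((nat_of_ord i == (nat_of_ord j).+1) && (m == n)) : nat)
  + (((nat_of_ord j == (nat_of_ord i).+1) && (n == m + 1)) : nat).

Definition eps (l : nat) (u v : vertex l) : int :=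
  (narrows u v)%:Z - (narrows v u)%:Z.

(* coefficient c_{uv} with {a_u, a_v} = c_{uv} a_u a_v, as given in the paper
   (the case i = j+1 is forced by antisymmetry) *)
Definition abr (l : nat) (u v : vertex l) : int :=
  let: (i, n) := u in let: (j, m) := v in
  if i == j then ((m == n + 1) : nat)%:Z - ((m == n - 1) : nat)%:Z
  else if nat_of_ord j == (nat_of_ord i).+1 then
    ((m == n - 1) : nat)%:Z - ((m == n) : nat)%:Z
  else if nat_of_ord i == (nat_of_ord j).+1 then
    ((m == n) : nat)%:Z - ((m == n + 1) : nat)%:Z
  else 0.

Definition is_poisson_bracket (F K : fieldType) (iota : F -> K) (br : K -> K -> K) : Prop :=
  [/\ forall f g, br f g = - br g f,
      forall f g h, br f (g + h) = br f g + br f h,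
      forall f g h, br f (g * h) = br f g * h + g * br f h,
      forall f g h, br f (br g h) + br g (br h f) + br h (br f g) = 0
    & forall c f, br (iota c) f = 0].

Definition generated_by (F K : fieldType) (iota : F -> K) (I : Type) (x : I -> K) : Prop :=
  forall P : K -> Prop,
    (forall c, P (iota c)) -> (forall i, P (x i)) ->
    (forall f g, P f -> P g -> P (f + g)) -> (forall f, P f -> P (- f)) ->
    (forall f g, P f -> P g -> P (f * g)) -> (forall f, P f -> P (f^-1)) ->
    forall f, P f.

(* Main.v *)
Require Import Defs.
From HB Require Import structures.
From mathcomp Require Import all_boot all_order all_algebra.
From mathcomp Require Import ring.
Import Order.TTheory GRing.Theory Num.Theory.
Local Open Scope ring_scope.
Lemma eps_abr l (u v : vertex l) : eps u v = abr u v.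
Proof.
case: u v => [[i Hi] n] [[j Hj] m] ; rewrite /eps /abr /narrows /=.
have E1 : (n == m + 1) = (m == n - 1) by rewrite [RHS]eq_sym subr_eq.
have E2 : (m == n) = (n == m) by rewrite eq_sym.
have -> : (Ordinal Hi == Ordinal Hj) = (i == j)%N by [].
have -> : (Ordinal Hj == Ordinal Hi) = (i == j)%N by rewrite eq_sym.
rewrite E1 E2.
move: Hi Hj; clear => _ _.
have F : forall k, (k == k.+1)%N = false by move=> k; apply: ltn_eqF.
case: (eqVneq i j) => [<-|ij] /=.
  by rewrite F /= !addn0.
case: (eqVneq j i.+1) => [->|ji] /=.
  have -> : (i == i.+2) = false by apply: ltn_eqF; apply: leqW.
  rewrite /= !add0n !addn0.
  by case: (m == n - 1); case: (n == m).
case: (i == j.+1) => /=.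
  by rewrite !add0n !addn0; case: (m == n + 1); case: (n == m).
by [].
Qed.

Section Der.
Variables (KX Ka : fieldType) (beta : {rmorphism KX -> Ka}).

Definition isder (D : KX -> Ka) :=
  (forall f g, D (f + g) = D f + D g) /\
  (forall f g, D (f * g) = D f * beta g + beta f * D g).

Lemma der0 {D} : isder D -> D 0 = 0.
Proof.
case=> Dadd _; have := Dadd 0 0; rewrite addr0 => h.
by have := congr1 (fun x => x - D 0) h; rewrite addrK subrr => <-.
Qed.

Lemma der1 {D} : isder D -> D 1 = 0.
Proof.
move=> [Dadd Dmul]; have := Dmul 1 1; rewrite mulr1 rmorph1 mulr1 mul1r => h.
have : D 1 + D 1 - D 1 = D 1 by rewrite -addrA subrr addr0.
by rewrite -h subrr => <-.
Qed.

Lemma derN {D} : isder D -> forall f, D (- f) = - D f.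
Proof.
move=> hD f; have := (proj1 hD) f (- f); rewrite subrr der0 // => h.
by apply: (addrI (D f)); rewrite -h subrr.
Qed.

Lemma derV {D} : isder D -> forall f, f != 0 -> D (f^-1) = - D f / (beta f ^+ 2).
Proof.
move=> hD f nf; have bf : beta f != 0 by rewrite fmorph_eq0.
have := (proj2 hD) f f^-1; rewrite mulfV // der1 // fmorphV => h.
have e : beta f * D f^-1 = - (D f * (beta f)^-1).
  by apply: (addrI (D f * (beta f)^-1)); rewrite -h subrr.
have -> : D f^-1 = (beta f * D f^-1) / beta f by field.
rewrite e; field; done.
Qed.

Lemma der_unique (F : fieldType) (iX : F -> KX) (I : Type) (X : I -> KX) D1 D2 :
  generated_by iX X -> isder D1 -> isder D2 ->
  (forall c, D1 (iX c) = D2 (iX c)) -> (forall i, D1 (X i) = D2 (X i)) ->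
  forall f, D1 f = D2 f.
Proof.
move=> gen h1 h2 hc hx; apply: gen => //.
- by move=> f g e1 e2; rewrite (proj1 h1) (proj1 h2) e1 e2.
- by move=> f e; rewrite (derN h1) (derN h2) e.
- by move=> f g e1 e2; rewrite (proj2 h1) (proj2 h2) e1 e2.
- move=> f e; have [->|nf] := eqVneq f 0; first by rewrite invr0 (der0 h1) (der0 h2).
  by rewrite (derV h1) // (derV h2) // e.
Qed.
End Der.

Lemma br_mull (F K : fieldType) (iota : F -> K) br :
  is_poisson_bracket iota br -> forall f g h, br (f * g) h = br f h * g + f * br g h.
Proof.
case=> anti _ mul _ _ f g h.
by rewrite anti mul (anti h f) (anti h g); ring.
Qed.

Lemma br_addl (F K : fieldType) (iota : F -> K) br :
  is_poisson_bracket iota br -> forall f g h, br (f + g) h = br f h + br g h.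
Proof.
case=> anti add _ _ _ f g h.
by rewrite anti add (anti h f) (anti h g) opprD !opprK.
Qed.

Lemma br_inv2 (F K : fieldType) (iota : F -> K) br :
  is_poisson_bracket iota br -> forall x y, x != 0 -> y != 0 ->
  br (x^-1) (y^-1) = br x y / (x ^+ 2 * y ^+ 2).
Proof.
move=> hb x y nx ny.
have hd : forall z, @isder K K (idfun : {rmorphism K -> K}) (br z).
  by move=> z; case: hb => anti add mul _ _; split=> f g; [apply: add | apply: mul].
rewrite (@derV K K idfun _ (hd _)) //.
case: (hb) => anti _ _ _ _.
rewrite anti (@derV K K idfun _ (hd _)) // anti /=.
by field; rewrite ?mulf_neq0 ?expf_neq0 ?nx ?ny.
Qed.

Arguments br_addl {F K iota br}.
Arguments br_mull {F K iota br}.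
Arguments br_inv2 {F K iota br}.

Theorem proposition4p4 (l : nat) (F KX Ka : fieldType)
  (iX : {rmorphism F -> KX}) (ia : {rmorphism F -> Ka})
  (brX : KX -> KX -> KX) (bra : Ka -> Ka -> Ka)
  (X : vertex l -> KX) (a : vertex l -> Ka) :
  (0 < l)%N ->
  is_poisson_bracket iX brX -> is_poisson_bracket ia bra ->
  generated_by iX X -> generated_by ia a ->
  (forall u, X u != 0) -> (forall u, a u != 0) ->
  (forall u v, brX (X u) (X v) = (eps u v)%:~R * X u * X v) ->
  (forall u v, bra (a u) (a v) = (abr u v)%:~R * a u * a v) ->
  forall beta : {rmorphism KX -> Ka},
    bijective beta ->
    (forall c, beta (iX c) = ia c) ->
    (forall u, beta (X u) = (a u)^-1) ->
    forall f g, beta (brX f g) = bra (beta f) (beta g).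
Proof.
move=> _ hX ha gX _ nX na eX ea beta _ bc bX.
have hX' := hX; have ha' := ha.
case: hX' => antiX addX mulX _ cX.
case: ha' => antia adda mula _ ca.
have step1 : forall v f, beta (brX f (X v)) = bra (beta f) (beta (X v)).
  move=> v.
  apply: (der_unique _ _ beta _ _ _ _ _ _ gX).
  - split=> f g; first by rewrite (br_addl hX) rmorphD.
    by rewrite (br_mull hX) rmorphD !rmorphM.
  - split=> f g; first by rewrite rmorphD (br_addl ha).
    by rewrite !rmorphM (br_mull ha).
  - by move=> c; rewrite cX bc ca rmorph0.
  - move=> u; rewrite eX !rmorphM rmorph_int !bX (br_inv2 ha) // ea eps_abr.
    by field; rewrite ?na.
move=> f.
apply: (der_unique _ _ beta _ _ _ _ _ _ gX).
- split=> g h; first by rewrite addX rmorphD.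
  by rewrite mulX rmorphD !rmorphM.
- split=> g h; first by rewrite rmorphD adda.
  by rewrite rmorphM mula.
- by move=> c; rewrite antiX cX oppr0 rmorph0 bc antia ca oppr0.
- by move=> v; rewrite step1.
Qed.
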